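(* Let $d\ge 2$ and let $K$ be a finite shellable pure $d$-dimensional abstract simplicial complex whose dual graph is a path graph. Then the 1-skeleton graph of $K$ is Hamiltonian.
   Context: A finite abstract simplicial complex is a finite set of nonempty finite sets closed under taking nonempty subsets; its facets are its maximal sets, and it is pure of dimension $d$ if all facets have $d+1$ elements. It is shellable if there is an ordering $x_1,\dots,x_n$ of its facets such that for every $k\ge 2$ the intersection of the complex generated by $x_k$ with the complex generated by $x_1,\dots,x_{k-1}$ is a shellable pure $(d-1)$-dimensional complex (the complex generated by a collection of sets is the set of all their nonempty subsets). The dual graph has the facets as vertices, two distinct facets being adjacent if they intersect in a $(d-1)$-simplex (a set of $d$ elements). The 1-skeleton graph has vertices the one-element sets and edges the two-element sets; it is Hamiltonian if it has a closed simple cycle through every vertex exactly once. *)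

(* Defs.v *)
From mathcomp Require Import all_boot.
Set Implicit Arguments. Unset Strict Implicit. Unset Printing Implicit Defensive.

Section Complexes.
Variable T : finType.

Definition is_complex (K : {set {set T}}) : Prop :=
  set0 \notin K /\
  forall A B : {set T}, A \in K -> B != set0 -> B \subset A -> B \in K.

Definition facets (K : {set {set T}}) : {set {set T}} :=
  [set F in K | [forall G in K, (F \subset G) ==> (G == F)]].

(* pure with all facets of cardinality m (i.e. dimension m-1) *)
Definition pure (m : nat) (K : {set {set T}}) : Prop :=
  forall F, F \in facets K -> #|F| = m.

Definition gen (C : seq {set T}) : {set {set T}} :=
  [set A : {set T} | (A != set0) && has (fun F : {set T} => A \subset F) C].

Fixpoint shellable (m : nat) (K : {set {set T}}) : Prop :=
  pure m K /\
  exists s : seq {set T},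
    perm_eq s (enum (facets K)) /\
    forall k, 0 < k < size s ->
      match m with
      | 0 => False
      | m'.+1 => shellable m' (gen [:: nth set0 s k] :&: gen (take k s))
      end.

Definition dual_adj (m : nat) (F G : {set T}) : Prop :=
  F != G /\ #|F :&: G| = m.-1.

Definition dual_is_path (m : nat) (K : {set {set T}}) : Prop :=
  exists s : seq {set T},
    perm_eq s (enum (facets K)) /\ 0 < size s /\
    forall i j, i < size s -> j < size s ->
      (dual_adj m (nth set0 s i) (nth set0 s j) <-> (i = j.+1 \/ j = i.+1)).

Definition skel_edge (K : {set {set T}}) (x y : T) : bool :=
  (x != y) && ([set x; y] \in K).

Definition skeleton_hamiltonian (K : {set {set T}}) : Prop :=
  exists c : seq T,
    uniq c /\ 3 <= size c /\
    (forall x, x \in c <-> [set x] \in K) /\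
    cycle (skel_edge K) c.

End Complexes.

(* Main.v *)
Require Import Defs.
From mathcomp Require Import all_boot.
From mathcomp Require Import zify.
Set Implicit Arguments. Unset Strict Implicit.

Lemma facet_above (T : finType) (L : {set {set T}}) (A : {set T}) :
  A \in L -> exists2 B, B \in facets L & A \subset B.
Proof.
move=> AL.
have hA : A \in [set B in L | A \subset B] by rewrite inE AL subxx.
case: (arg_maxnP (fun B : {set T} => #|B|) hA) => B.
move=> HB Bmax.
have : B \in [set B0 in L | A \subset B0] := HB.
rewrite inE => /andP[BL AB].
exists B => //. rewrite /facets inE BL /=.
apply/forall_inP => G GL; apply/implyP => BG.
have := Bmax G. rewrite -[_ G]/(G \in [set B0 in L | A \subset B0]) inE GL (subset_trans AB BG) => /(_ isT) le.
by rewrite eq_sym eqEcard BG; apply: le.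
Qed.

Lemma neq_k2 k : k != k.+2. Proof. by elim: k. Qed.
Lemma no_k3 k : k = k.+3 \/ k.+2 = k.+1 -> False.
Proof. move=> [] /eqP; rewrite ?eqSS; by elim: k. Qed.

Lemma shell_pure (T : finType) m (L : {set {set T}}) : shellable m L -> pure m L.
Proof. by case: m => [|m] []. Qed.

Lemma path_in (T : finType) (e : rel T) (P : pred T) :
  (forall x y, P x -> P y -> x != y -> e x y) ->
  forall p a, uniq (a :: p) -> P a -> all P p -> path e a p.
Proof.
move=> he; elim=> [|b p IH] a //= /andP[]; rewrite in_cons negb_or => /andP[ab _] up Pa /andP[Pb Pp].
by rewrite he // IH.
Qed.

Lemma cycle_in (T : finType) (e : rel T) (P : pred T) :
  (forall x y, P x -> P y -> x != y -> e x y) ->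
  forall x y p, uniq (x :: y :: p) -> all P (x :: y :: p) -> cycle e (x :: y :: p).
Proof.
move=> he x y p u hall.
have Px : P x by case/andP: hall.
have Pyp : all P (y :: p) by case/andP: hall.
rewrite /cycle rcons_path (path_in he u Px Pyp) /=.
apply: he => //.
  by apply: (allP Pyp); apply: mem_last.
move: u => /= /andP[]; rewrite in_cons negb_or => /andP[xy xp] _.
have : last y p \in y :: p by apply: mem_last.
by apply: contraTneq => ->; rewrite in_cons negb_or xy xp.
Qed.

Theorem mainTheorem5 (T : finType) (d : nat) (K : {set {set T}}) :
  2 <= d ->
  is_complex K ->
  pure d.+1 K ->
  shellable d.+1 K ->
  dual_is_path d.+1 K ->
  skeleton_hamiltonian K.
Proof.
move=> d2 [K0 Kcl] hpure [_ [t [ht hsh]]] [s [hs [hn hadj]]].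
set n := size s.
have tn : size t = n by rewrite (perm_size ht) -(perm_size hs).
have us : uniq s by rewrite (perm_uniq hs) enum_uniq.
have ut : uniq t by rewrite (perm_uniq ht) enum_uniq.
pose S i := nth set0 s i.
have facK : forall F, F \in facets K -> F \in K by move=> F; rewrite inE => /andP[].
have Sfac : forall i, i < n -> S i \in facets K.
  by move=> i hi; rewrite -mem_enum -(perm_mem hs) mem_nth.
have SK : forall i, i < n -> S i \in K by move=> i hi; apply/facK/Sfac.
have cS : forall i, i < n -> #|S i| = d.+1 by move=> i hi; apply/hpure/Sfac.
have Sinj : forall i j, i < n -> j < n -> S i = S j -> i = j.
  by move=> i j hi hj /eqP; rewrite nth_uniq // => /eqP.
have inter_le : forall i j, i < n -> j < n -> i != j -> #|S i :&: S j| <= d.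
  move=> i j hi hj ij; rewrite leqNgt; apply/negP => hlt.
  have e1 : S i :&: S j = S i.
    by apply/eqP; rewrite eqEcard subsetIl cS.
  have e2 : S i = S j.
    apply/eqP; rewrite eqEcard -e1 subsetIr /= e1 !cS //.
  by move: ij; rewrite (Sinj _ _ hi hj e2) eqxx.
have adj_of : forall i j, i < n -> j < n -> i != j -> d <= #|S i :&: S j| ->
    i = j.+1 \/ j = i.+1.
  move=> i j hi hj ij hd; apply/(hadj i j hi hj); split.
    by apply/eqP => /(Sinj _ _ hi hj) /eqP; rewrite (negbTE ij).
  by apply/eqP; rewrite eqn_leq inter_le.
have adjI : forall i, i.+1 < n -> #|S i :&: S i.+1| = d.
  by move=> i hi; have [_ ->] := (proj2 (hadj i i.+1 (ltnW hi) hi)) (or_intror erefl).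
have Sint : forall i, i < n -> S i \in t.
  by move=> i hi; rewrite (perm_mem ht) mem_enum Sfac.
rewrite tn in hsh.
have shell : forall q r v, q < n -> r < n -> v \in S q -> v \in S r ->
    index (S r) t < index (S q) t ->
    exists q', [/\ q' < n, v \in S q', index (S q') t < index (S q) t &
                  (q = q'.+1 \/ q' = q.+1)].
  move=> q r v hq hr vq vr hlt.
  have Sqt := Sint q hq; have Srt := Sint r hr.
  set k := index (S q) t in hlt *.
  have kn : k < n by rewrite -tn index_mem.
  have tk : nth set0 t k = S q by rewrite nth_index.
  have k0 : 0 < k by apply: (leq_ltn_trans (leq0n _) hlt).
  have := hsh k; rewrite k0 kn => /(_ isT) /shell_pure; rewrite tk => hp.
  have vL : [set v] \in gen [:: S q] :&: gen (take k t).
    rewrite inE; apply/andP; split; rewrite inE; apply/andP; split.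
    - by apply/set0Pn; exists v; rewrite inE.
    - by rewrite /= sub1set vq.
    - by apply/set0Pn; exists v; rewrite inE.
    apply/hasP; exists (S r); last by rewrite sub1set.
    rewrite -(nth_index set0 Srt) -(nth_take _ hlt); apply: mem_nth.
    by rewrite size_takel // tn ltnW.
  have [B BL vB] := facet_above vL.
  have cB := hp B BL.
  have : B \in gen [:: S q] :&: gen (take k t) by move: BL; rewrite inE => /andP[].
  rewrite !inE => /andP[/andP[_ hB1] /andP[_ /hasP[H Htk BH]]].
  rewrite /= orbF in hB1.
  have Ht : H \in t := mem_take Htk.
  have Hs : H \in s by rewrite (perm_mem hs) -(perm_mem ht).
  have q'n : index H s < n by rewrite index_mem.
  have SH : S (index H s) = H by rewrite /S nth_index.
  have posH : index H t < k.
    move/(nthP set0): Htk => [j hj hjH].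
    rewrite size_takel in hj; last by rewrite tn ltnW.
    rewrite nth_take in hjH => //.
    by rewrite -hjH index_uniq // tn (leq_trans hj (ltnW kn)).
  exists (index H s); rewrite SH; split => //.
    by apply: (subsetP BH); apply: (subsetP vB); rewrite inE.
  apply: adj_of => //.
    apply/eqP => e; move: posH; by rewrite -SH -e -/k ltnn.
  by rewrite -cB; apply: subset_leq_card; rewrite subsetI hB1 SH BH.
have interval : forall v N q r, index (S q) t < N -> index (S r) t < N ->
    q < n -> r < n -> v \in S q -> v \in S r ->
    forall l, (q <= l <= r) || (r <= l <= q) -> v \in S l.
  move=> v; elim=> [|N IH] q r //.
  have step : forall q r, index (S r) t < index (S q) t -> index (S q) t < N.+1 ->
      q < n -> r < n -> v \in S q -> v \in S r ->
      forall l, (q <= l <= r) || (r <= l <= q) -> v \in S l.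
    move=> q1 r1 hlt hq hq1 hr1 vq vr l hl.
    have [q' [q'n vq' hpos hadjq]] := shell q1 r1 v hq1 hr1 vq vr hlt.
    have [->//|ne] := eqVneq l q1.
    apply: (IH q' r1) => //; clear -hpos hlt hq hadjq hl ne; lia.
  move=> hq hr hqn hrn vq vr l hl.
  case: (ltngtP (index (S q) t) (index (S r) t)) => c.
  - by apply: (step r q) => //; rewrite orbC.
  - by apply: (step q r).
  have e : S q = S r by rewrite -(nth_index set0 (Sint q hqn)) c nth_index // Sint.
  have qr := Sinj _ _ hqn hrn e.
  have -> : l = q by clear -qr hl; lia.
  done.
have edge : forall i x y, i < n -> x \in S i -> y \in S i -> x != y ->
    skel_edge K x y.
  move=> i x y hi xi yi xy; rewrite /skel_edge xy /=.
  apply: (Kcl (S i)); first exact: SK.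
    by apply/set0Pn; exists x; rewrite !inE eqxx.
  by rewrite subUset !sub1set xi yi.
have vert : forall x, [set x] \in K <-> exists2 i, i < n & x \in S i.
  move=> x; split.
    move=> /facet_above [B Bf xB].
    have Bs : B \in s by rewrite (perm_mem hs) mem_enum.
    exists (index B s); first by rewrite index_mem.
    by rewrite /S nth_index // -sub1set.
  case=> i hi xi; apply: (Kcl _ _ (SK i hi)).
    by apply/set0Pn; exists x; rewrite !inE.
  by rewrite sub1set.
have inv : forall k, k < n -> exists x y rest,
    [/\ uniq (x :: y :: rest), 3 <= size (x :: y :: rest),
     (forall z, z \in x :: y :: rest <-> exists2 i, i <= k & z \in S i),
     cycle (skel_edge K) (x :: y :: rest) &
     [/\ x \in S k, y \in S k, x != y & (k.+1 < n -> x \in S k.+1 /\ y \in S k.+1)]].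
  elim=> [|k IH] hk.
    pose X := if 1 < n then S 0 :&: S 1 else S 0.
    have X2 : 1 < #|X|.
      rewrite /X; case: ifP => h1; first by rewrite adjI.
      by rewrite cS //; apply: leq_trans d2 (leqnSn d).
    have XS : X \subset S 0 by rewrite /X; case: ifP => _; rewrite ?subsetIl ?subxx.
    have X1 : 1 < n -> X \subset S 1 by rewrite /X => ->; rewrite subsetIr.
    case/card_gt1P: X2 => x [y [xX yX xy]].
    have x0 := subsetP XS x xX; have y0 := subsetP XS y yX.
    exists x, y, (enum (S 0 :\: [set x; y])).
    have memS : forall z, (z \in [:: x, y & enum (S 0 :\: [set x; y])]) = (z \in S 0).
      move=> z; rewrite !in_cons mem_enum !inE.
      case: (eqVneq z x) => [->|zx] /=; first by rewrite x0.
      case: (eqVneq z y) => [->|zy] /=; first by rewrite y0.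
      by case: (z \in S 0).
    have u0 : uniq [:: x, y & enum (S 0 :\: [set x; y])].
      by rewrite /= !in_cons !mem_enum !inE !eqxx /= enum_uniq orbT orbF xy.
    split => //.
    - rewrite /= -cardE cardsD.
      have -> : S 0 :&: [set x; y] = [set x; y].
        by apply/setIidPr; rewrite subUset !sub1set x0 y0.
      rewrite cards2 xy cS //; clear -d2; lia.
    - move=> z; rewrite memS; split => [h|[i hi zi]]; first by exists 0.
      by move: hi zi; rewrite leqn0 => /eqP ->.
    - have he : forall a b, a \in S 0 -> b \in S 0 -> a != b -> skel_edge K a b.
        by move=> a b a0 b0 ab; apply: (edge 0).
      apply: (cycle_in he u0).
      by apply/allP => z; rewrite memS.
    - split => // h1; split; apply: (subsetP (X1 h1)) => //.
  have [x [y [rest [u sz mem cyc [xk yk xy xk1']]]]] := IH (ltnW hk).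
  have [xk1 yk1] := xk1' hk.
  have : #|S k.+1 :\: S k| == 1 by rewrite cardsD setIC adjI // cS // subSnn.
  case/cards1P => b hb.
  have : b \in S k.+1 :\: S k by rewrite hb set11.
  rewrite inE => /andP[bk bk1].
  have onlyb : forall z, z \in S k.+1 -> z \notin S k -> z = b.
    move=> z z1 zk; have : z \in S k.+1 :\: S k by rewrite inE z1 zk.
    by rewrite hb inE => /eqP.
  have bc : b \notin x :: y :: rest.
    apply/negP => /mem [i hi bi].
    have hin : i < n by apply: leq_ltn_trans hi (ltnW hk).
    have pi : index (S i) t < n by rewrite -tn index_mem Sint.
    have pk : index (S k.+1) t < n by rewrite -tn index_mem Sint.
    have := interval b n i k.+1 pi pk hin hk bi bk1 k.
    by rewrite hi leqnSn /= => /(_ isT); apply/negP.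
  have xb : x != b by apply/eqP => e; rewrite -e xk in bk.
  have yb : y != b by apply/eqP => e; rewrite -e yk in bk.
  have exb : skel_edge K x b by apply: (edge k.+1).
  have eby : skel_edge K b y by apply: (edge k.+1); rewrite // eq_sym.
  have Q : path (skel_edge K) y (rcons rest x) by move: cyc => /= /andP[].
  have gen : forall c', perm_eq c' (b :: x :: y :: rest) ->
      [/\ uniq c', 3 <= size c' &
       forall z, z \in c' <-> exists2 i, i <= k.+1 & z \in S i].
    move=> c' pc; rewrite (perm_uniq pc) (perm_size pc) /= -/(uniq (x :: y :: rest)) u bc.
    split => //.
    move=> z; rewrite (perm_mem pc) in_cons; split.
      case/orP => [/eqP ->|/mem [i hi zi]]; first by exists k.+1.
      by exists i => //; apply: leq_trans hi _.
    case=> i hi zi; case: (eqVneq i k.+1) => [ei|ne].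
      rewrite ei in zi; case: (boolP (z \in S k)) => zk.
        by apply/orP; right; apply/mem; exists k.
      by rewrite (onlyb z zi zk) eqxx.
    by apply/orP; right; apply/mem; exists i => //; rewrite -ltnS ltn_neqAle ne hi.
  have p1 : perm_eq (x :: b :: y :: rest) (b :: x :: y :: rest).
    by apply/permPl; exact: (perm_catCA [:: x] [:: b] _).
  have p2 : perm_eq (b :: y :: rcons rest x) (b :: x :: y :: rest).
    by rewrite perm_cons -rcons_cons; apply/permPl; exact: perm_rcons.
  have c1 : cycle (skel_edge K) (x :: b :: y :: rest) by rewrite /= exb eby.
  have c2 : cycle (skel_edge K) (b :: y :: rcons rest x).
    by rewrite /= eby rcons_path Q last_rcons exb.
  case: (boolP (k.+2 < n)) => hk2; last first.
    have [g1 g2 g3] := gen _ p1.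
    exists x, b, (y :: rest); split => //.
  have bk2 : b \in S k.+2.
    case: (boolP (b \in S k.+2)) => // nb.
    have : d <= #|S k :&: S k.+2|.
      rewrite -(adjI k.+1 hk2); apply: subset_leq_card; apply/subsetP => z.
      rewrite !inE => /andP[z1 z2]; rewrite z2 andbT.
      apply/negPn/negP => zk; move: (onlyb z z1 zk) => e.
      by rewrite -e z2 in nb.
    move=> /(adj_of k k.+2 (ltnW (ltnW hk2)) hk2 (neq_k2 k)).
    by move=> H; case: (no_k3 H).
  have xory : (x \in S k.+2) || (y \in S k.+2).
    have : #|S k.+1 :\: S k.+2| == 1 by rewrite cardsD adjI // cS // subSnn.
    case/cards1P => a ha.
    case: (boolP (x \in S k.+2)) => //= xn; apply/negPn/negP => yn.
    have : x \in [set a] by rewrite -ha inE xn xk1.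
    have : y \in [set a] by rewrite -ha inE yn yk1.
    rewrite !inE => /eqP ya /eqP xa; by rewrite xa ya eqxx in xy.
  case/orP: xory => [xk2|yk2].
    have [g1 g2 g3] := gen _ p1.
    exists x, b, (y :: rest); split => //.
  have [g1 g2 g3] := gen _ p2.
  exists b, y, (rcons rest x); split => //; split => //; by rewrite eq_sym.
have [x [y [rest [u sz mem cyc _]]]] := inv n.-1 (ltac:(by rewrite ltn_predL)).
exists (x :: y :: rest); split => //; split => //; split => // z.
rewrite vert; split.
  by move/mem => [i hi zi]; exists i => //; rewrite -ltnS prednK in hi.
by case=> i hi zi; apply/mem; exists i => //; rewrite -ltnS prednK.
Qed.
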